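(* Let $R$ be a locally stable commutative ring. Then $R$ is an elementary divisor ring if and only if $R$ is a Bézout ring.
   Context: All rings are commutative with identity. A ring $R$ has stable range 1 if whenever $aR+bR=R$ there is $y\in R$ with $a+by$ a unit. $R$ is locally stable if whenever $a,b\in R$ with $aR+bR=R$ there is $y\in R$ such that $R/(a+by)R$ has stable range 1. A ring is Bézout if every finitely generated ideal is principal. A matrix $A$ (not necessarily square) admits diagonal reduction if there are invertible $P,Q$ with $PAQ$ diagonal $(d_{ij})$ and $d_{ii}\mid d_{(i+1)(i+1)}$ for each $i$; $R$ is an elementary divisor ring if every matrix over $R$ admits diagonal reduction. *)

(* Defs.v *)
From mathcomp Require Import all_boot all_order all_algebra.
Set Implicit Arguments. Unset Strict Implicit. Unset Printing Implicit Defensive.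
Import GRing.Theory.
Local Open Scope ring_scope.

Definition rdvd (R : comPzRingType) (x y : R) : Prop := exists r : R, y = x * r.

Definition runit (R : comPzRingType) (u : R) : Prop := exists v : R, u * v = 1.

Definition comax (R : comPzRingType) (a b : R) : Prop :=
  exists x y : R, a * x + b * y = 1.

Definition stable_range1 (R : comPzRingType) : Prop :=
  forall a b : R, comax a b -> exists y : R, runit (a + b * y).

(* The quotient ring R/cR has stable range 1, written out on representatives:
   an element of R/cR is the class of some a in R, and u == v in R/cR iff
   c | (u - v). *)
Definition stable_range1_mod (R : comPzRingType) (c : R) : Prop :=
  forall a b : R,
    (exists x z : R, rdvd c (a * x + b * z - 1)) ->
    exists y : R, exists v : R, rdvd c ((a + b * y) * v - 1).

Definition locally_stable (R : comPzRingType) : Prop :=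
  forall a b : R, comax a b -> exists y : R, stable_range1_mod (a + b * y).

Definition bezout_ring (R : comPzRingType) : Prop :=
  forall (n : nat) (a : 'I_n -> R), exists d : R,
    forall x : R,
      (exists c : 'I_n -> R, x = \sum_(i < n) c i * a i) <-> (exists r : R, x = d * r).

Definition invertible_mx (R : comPzRingType) (n : nat) (P : 'M[R]_n) : Prop :=
  exists P' : 'M[R]_n, P *m P' = 1%:M /\ P' *m P = 1%:M.

Definition diag_divchain (R : comPzRingType) (m n : nat) (D : 'M[R]_(m, n)) : Prop :=
  (forall (i : 'I_m) (j : 'I_n), nat_of_ord i <> nat_of_ord j -> D i j = 0) /\
  (forall (i i' : 'I_m) (j j' : 'I_n),
      nat_of_ord i = nat_of_ord j -> nat_of_ord i' = nat_of_ord j' ->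
      nat_of_ord i' = (nat_of_ord i).+1 -> rdvd (D i j) (D i' j')).

Definition admits_diagonal_reduction (R : comPzRingType) (m n : nat)
  (A : 'M[R]_(m, n)) : Prop :=
  exists (P : 'M[R]_m) (Q : 'M[R]_n),
    invertible_mx P /\ invertible_mx Q /\ diag_divchain (P *m A *m Q).

Definition elementary_divisor_ring (R : comPzRingType) : Prop :=
  forall (m n : nat) (A : 'M[R]_(m, n)), admits_diagonal_reduction A.

(* Main.v *)
Require Import Defs.
From mathcomp Require Import all_boot all_order all_algebra.
From mathcomp Require Import ring zify.
Set Implicit Arguments. Unset Strict Implicit. Unset Printing Implicit Defensive.
Import GRing.Theory.
Local Open Scope ring_scope.

Ltac bnd := repeat match goal with x : 'I_ ?k |- _ =>
  lazymatch goal with _ : is_true (nat_of_ord x < k)%N |- _ => fail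
  | _ => have := ltn_ord x; move=> ? end end.

Section Main.
Variable R : comPzRingType.
Hypothesis LS : locally_stable R.
Hypothesis BZ : bezout_ring R.

Lemma rdvd_refl (a : R) : rdvd a a. Proof. by exists 1; rewrite mulr1. Qed.
Lemma rdvd0 (a : R) : rdvd a 0. Proof. by exists 0; rewrite mulr0. Qed.
Lemma rdvdD (a x y : R) : rdvd a x -> rdvd a y -> rdvd a (x + y).
Proof. by move=> [r ->] [s ->]; exists (r + s); rewrite mulrDr. Qed.
Lemma rdvdMr (a x y : R) : rdvd a x -> rdvd a (x * y).
Proof. by move=> [r ->]; exists (r * y); rewrite mulrA. Qed.
Lemma rdvdMl (a x y : R) : rdvd a y -> rdvd a (x * y).
Proof. by move=> [r ->]; exists (x * r); rewrite mulrCA. Qed.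
Lemma rdvd_trans (a b c : R) : rdvd a b -> rdvd b c -> rdvd a c.
Proof. by move=> [r ->] [s ->]; exists (r * s); rewrite mulrA. Qed.
Lemma rdvdN (a x : R) : rdvd a x -> rdvd a (- x).
Proof. by move=> [r ->]; exists (- r); rewrite mulrN. Qed.
Lemma rdvd_sum (a : R) (I : Type) (r : seq I) (P : pred I) (F : I -> R) :
  (forall i, P i -> rdvd a (F i)) -> rdvd a (\sum_(i <- r | P i) F i).
Proof. by move=> h; apply: big_ind => //; [apply: rdvd0 | apply: rdvdD]. Qed.

Definition dvd_mx (d : R) m n (X : 'M[R]_(m, n)) := forall i j, rdvd d (X i j).

Lemma dvd_mxMl d m n p (P : 'M[R]_(p, m)) (X : 'M[R]_(m, n)) :
  dvd_mx d X -> dvd_mx d (P *m X).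
Proof. by move=> h i j; rewrite mxE; apply: rdvd_sum => k _; apply: rdvdMl. Qed.
Lemma dvd_mxMr d m n p (X : 'M[R]_(m, n)) (Q : 'M[R]_(n, p)) :
  dvd_mx d X -> dvd_mx d (X *m Q).
Proof. by move=> h i j; rewrite mxE; apply: rdvd_sum => k _; apply: rdvdMr. Qed.

Definition inrow (x : R) n (v : 'rV[R]_n) := exists c : 'cV[R]_n, x = (v *m c) 0 0.

Lemma inrow_mul n k (v : 'rV[R]_n) (M : 'M[R]_(n, k)) j : inrow ((v *m M) 0 j) v.
Proof. by exists (col j M); rewrite colE mulmxA -colE [RHS]mxE. Qed.

Lemma inrow_entry n (v : 'rV[R]_n) j : inrow (v 0 j) v.
Proof. by have := inrow_mul v 1%:M j; rewrite mulmx1. Qed.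

Lemma inrowD n (v : 'rV[R]_n) x y : inrow x v -> inrow y v -> inrow (x + y) v.
Proof. by move=> [c ->] [c' ->]; exists (c + c'); rewrite mulmxDr [RHS]mxE. Qed.

Lemma inrowMr n (v : 'rV[R]_n) x y : inrow x v -> inrow (x * y) v.
Proof.
by move=> [c ->]; exists (y *: c); rewrite -scalemxAr [RHS]mxE mulrC.
Qed.

Lemma inrow_trans x n k (v : 'rV[R]_n) (w : 'rV[R]_k) :
  (forall j, inrow (v 0 j) w) -> inrow x v -> inrow x w.
Proof.
move=> h [c ->].
have [f hf] := fin_all_exists h.
pose F : 'M[R]_(k, n) := \matrix_(l, j) (f j) l 0.
have -> : v = w *m F.
  apply/matrixP => i j; rewrite (ord1 i) hf !mxE; apply: eq_bigr => l _.
  by rewrite !mxE.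
by exists (F *m c); rewrite mulmxA.
Qed.

Lemma dvd_inrow h x n (v : 'rV[R]_n) :
  (forall j, rdvd h (v 0 j)) -> inrow x v -> rdvd h x.
Proof.
move=> hv [c ->]; rewrite mxE; apply: rdvd_sum => j _; apply: rdvdMr.
exact: hv.
Qed.

Lemma invertible1 n : invertible_mx (1%:M : 'M[R]_n).
Proof. by exists 1%:M; rewrite mulmx1. Qed.

Lemma invertibleM n (P Q : 'M[R]_n) :
  invertible_mx P -> invertible_mx Q -> invertible_mx (P *m Q).
Proof.
move=> [P' [h1 h2]] [Q' [h3 h4]]; exists (Q' *m P'); split.
  by rewrite mulmxA -(mulmxA P) h3 mulmx1 h1.
by rewrite mulmxA -(mulmxA Q') h2 mulmx1 h4.
Qed.

Lemma invertible_block m n (P : 'M[R]_m) (Q : 'M[R]_n) :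
  invertible_mx P -> invertible_mx Q -> invertible_mx (block_mx P 0 0 Q).
Proof.
move=> [P' [h1 h2]] [Q' [h3 h4]]; exists (block_mx P' 0 0 Q').
rewrite !mulmx_block !mulmx0 !mul0mx !addr0 !add0r h1 h2 h3 h4.
by rewrite -!scalar_mx_block.
Qed.

Lemma sr2 (x y z X Y Z : R) : x * X + y * Y + z * Z = 1 ->
  exists p q, comax (x + z * p) (y + z * q).
Proof.
move=> H.
have cm : comax y (x * X + z * Z) by exists Y, 1; rewrite mulr1 -H; ring.
have [k hk] := LS cm.
set c := y + (x * X + z * Z) * k in hk.
have [|p [v [r hr]]] := hk x z.
  exists (X * (1 - k * Y)), (Z * (1 - k * Y)); exists (- Y).
  rewrite /c -{3}H; ring.
exists p, (Z * k - p * X * k).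
exists (v - X * k * r), (- r).
have -> : 1 = (x + z * p) * v - c * r by rewrite -hr; ring.
rewrite /c; ring.
Qed.

Lemma sum2 (F : 'I_2 -> R) : \sum_(i < 2) F i = F ord0 + F (lift ord0 ord0).
Proof. by rewrite !big_ord_recl big_ord0 addr0. Qed.

Lemma comax_divide (a b : R) : exists d a' b', a = d * a' /\ b = d * b' /\ comax a' b'.
Proof.
pose f := fun i : 'I_2 => if i == ord0 then a else b.
have [d hd] := BZ f.
have [[a1 ha1] [b1 hb1]] : (exists r, a = d * r) /\ (exists r, b = d * r).
  split; apply/hd.
    by exists (fun i => if i == ord0 then 1 else 0); rewrite sum2 /f /=; ring.
  by exists (fun i => if i == ord0 then 0 else 1); rewrite sum2 /f /=; ring.
have [c hc] : exists c : 'I_2 -> R, d = \sum_(i < 2) c i * f i.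
  by apply/hd; exists 1; rewrite mulr1.
rewrite sum2 /f /= in hc.
set c0 := c ord0 in hc; set c1 := c (lift ord0 ord0) in hc.
have [p [q hpq]] := @sr2 a1 b1 (1 - a1 * c0 - b1 * c1) c0 c1 1 ltac:(ring).
exists d, (a1 + (1 - a1 * c0 - b1 * c1) * p), (b1 + (1 - a1 * c0 - b1 * c1) * q).
have hz : d * (1 - a1 * c0 - b1 * c1) = 0.
  have -> : d * (1 - a1 * c0 - b1 * c1) = d - (d * a1) * c0 - (d * b1) * c1 by ring.
  by rewrite -ha1 -hb1 {1}hc; ring.
split; last split => //.
  by rewrite mulrDr mulrA hz mul0r addr0.
by rewrite mulrDr mulrA hz mul0r addr0.
Qed.
Lemma sr1_mod_dvd (w g : R) : stable_range1_mod w -> rdvd g w -> stable_range1_mod g.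
Proof.
move=> hw [u hu] a b [x [z [m hm]]].
have [|y [v [r hr]]] := hw a (b * z - g * m).
  exists x, 1; exists 0.
  have -> : a * x + (b * z - g * m) * 1 - 1 = (a * x + b * z - 1) - g * m by ring.
  by rewrite hm subrr mulr0.
exists (z * y), v; exists (r * u + m * y * v).
have -> : (a + b * (z * y)) * v - 1 = ((a + (b * z - g * m) * y) * v - 1) + g * (m * y * v) by ring.
by rewrite hr hu; ring.
Qed.

Lemma gh3 (a b c x y z : R) : b * x + c * y + a * z = 1 ->
  exists s t, comax (s * a + t * b) (t * c).
Proof.
move=> H.
have cm : comax b (c * y + a * z) by exists x, 1; rewrite mulr1 addrA.
have [k hk] := LS cm.
set w := b + (c * y + a * z) * k in hk.
have [g [w1 [a1 [hw [ha [al [be hab]]]]]]] := comax_divide w a.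
have hg : stable_range1_mod g by apply: sr1_mod_dvd hk _; exists w1.
set e := y * (1 - k * x).
have [|ze [v [r hr]]] := hg (al * c) (- (a1 * c)).
  exists (e * w1), (- (be * e)); exists (- x * w1 + k * x * a1 * z - a1 * z).
  have -> : al * c * (e * w1) + - (a1 * c) * - (be * e) - 1
     = c * e * (w1 * al + a1 * be) - 1 by ring.
  rewrite hab mulr1 /e.
  have -> : c * (y * (1 - k * x)) - 1 = c * (y * (1 - k * x)) - (b * x + c * y + a * z) by rewrite H.
  have -> : c * (y * (1 - k * x)) - (b * x + c * y + a * z) = - x * w + k * x * a * z - a * z by rewrite /w; ring.
  by rewrite hw ha; ring.
set t := al - ze * a1.
set s := t * k * z + (be + ze * w1).
have hsg : s * a + t * b = g - t * k * y * c.
  have h1 : t * w + (be + ze * w1) * a = g.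
    rewrite hw ha.
    have -> : t * (g * w1) + (be + ze * w1) * (g * a1) = g * (w1 * al + a1 * be) by rewrite /t; ring.
    by rewrite hab mulr1.
  rewrite -{1}h1 /s /w; ring.
exists s, t; exists (- r), (v - k * y * r).
have -> : 1 = (al * c + - (a1 * c) * ze) * v - g * r by rewrite -hr; ring.
have -> : g = s * a + t * b + t * k * y * c by rewrite hsg; ring.
rewrite /t; ring.
Qed.
Lemma row_block n k (x : 'rV[R]_(n + k)) (A : 'M[R]_n) (B : 'M[R]_k) :
  x *m block_mx A 0 0 B = row_mx (lsubmx x *m A) (rsubmx x *m B).
Proof. by rewrite -{1}(hsubmxK x) mul_row_block !mulmx0 addr0 add0r. Qed.

Lemma hermite_row n (v : 'rV[R]_n.+1) : exists Q : 'M[R]_n.+1, invertible_mx Q /\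
  (forall j : 'I_n.+1, (j : nat) != 0%N -> (v *m Q) 0 j = 0) /\
  (forall j, rdvd ((v *m Q) 0 ord0) (v 0 j)).
Proof.
elim: n v => [|n IH] v.
  exists 1%:M; split; first exact: invertible1.
  split; first by move=> j; rewrite (ord1 j).
  by move=> j; rewrite mulmx1 (ord1 j); apply: rdvd_refl.
pose v' : 'rV[R]_(1 + n.+1) := v.
have [Q' [iQ' [hz' hd']]] := IH (rsubmx v').
set e := (rsubmx v' *m Q') 0 ord0.
have [d [x [y [hx [hy [al [be hab]]]]]]] := comax_divide (v 0 ord0) e.
pose M2 : 'M[R]_2 := \matrix_(i, j) if i == ord0 then (if j == ord0 then al else - y)
                                    else (if j == ord0 then be else x).
pose Q1 : 'M[R]_(1 + n.+1) := block_mx 1%:M 0 0 Q'.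
pose Q2 : 'M[R]_(2 + n) := block_mx M2 0 0 1%:M.
have iM2 : invertible_mx M2.
  pose M2' : 'M[R]_2 := \matrix_(i, j) if i == ord0 then (if j == ord0 then x else y)
                                    else (if j == ord0 then - be else al).
  exists M2'; split; apply/matrixP => i j; rewrite !mxE !big_ord_recl big_ord0 !mxE;
  case: i => [[|[|i]] hi] //; case: j => [[|[|j]] hj] //=;
  rewrite -?hab; ring.
have i1 : invertible_mx Q1 by apply: invertible_block => //; exact: invertible1.
have i2 : invertible_mx Q2 by apply: invertible_block => //; exact: invertible1.
have iQ : invertible_mx ((Q1 : 'M[R]_n.+2) *m (Q2 : 'M[R]_n.+2)) by apply: invertibleM.
exists ((Q1 : 'M[R]_n.+2) *m (Q2 : 'M[R]_n.+2)); split => //.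
have hw : v' *m Q1 = row_mx (lsubmx v') (rsubmx v' *m Q') by rewrite row_block mulmx1.
have [w hwd] : exists w : 'rV[R]_(1 + n.+1), v' *m Q1 = w by eexists.
have wE : forall j : 'I_n.+2, w 0 j =
    if (j == 0 :> nat) then v 0 ord0 else if (j == 1 :> nat) then e else 0.
  move=> j; rewrite -hwd hw; case: (split_ordP (j : 'I_(1 + n.+1))) => [k0 -> | k ->].
    rewrite row_mxEl mxE (ord1 k0) /=; congr (v _ _); exact: val_inj.
  rewrite row_mxEr /=; case: k => [[|k] hk] /=; first by rewrite /e; congr (_ _ _); exact: val_inj.
  by rewrite hz'.
have M2E : forall i j, M2 i j = if i == ord0 then (if j == ord0 then al else - y)
                                    else (if j == ord0 then be else x).
  by move=> i j; rewrite mxE.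
have hQ : forall j : 'I_n.+2, (v *m ((Q1 : 'M[R]_n.+2) *m (Q2 : 'M[R]_n.+2))) 0 j =
    if (j == 0 :> nat) then d else 0.
  move=> j; rewrite mulmxA.
  change ((((v' *m Q1) : 'rV[R]_(2 + n)) *m Q2) 0 j = if (j == 0 :> nat) then d else 0).
  rewrite hwd row_block mulmx1.
  case: (split_ordP (j : 'I_(2 + n))) => [j2 -> | k ->].
    rewrite row_mxEl [LHS]mxE !big_ord_recl big_ord0 /= !M2E.
    rewrite /lsubmx !mxE !wE /= addr0.
    case: j2 => [[|[|j2]] hj2] //=; rewrite ?hx ?hy.
      by rewrite -[RHS]mulr1 -hab; ring.
    ring.
  by rewrite row_mxEr mxE wE /=.
split.
  by move=> j hj; rewrite hQ (negPf hj).
move=> j; rewrite hQ /=.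
case: (split_ordP (j : 'I_(1 + n.+1))) => [k0 -> | k ->].
  rewrite (ord1 k0).
  have -> : (lshift n.+1 (0 : 'I_1) : 'I_n.+2) = ord0 by exact: val_inj.
  by rewrite hx; apply: rdvdMr; apply: rdvd_refl.
apply: (@rdvd_trans _ e); first by rewrite hy; apply: rdvdMr; apply: rdvd_refl.
have := hd' k; rewrite -/e mxE; done.
Qed.
Lemma inrow_dvd g x n (w : 'rV[R]_n) : inrow g w -> rdvd g x -> inrow x w.
Proof. by move=> h [r ->]; apply: inrowMr. Qed.

Lemma triple_div (d v0 e : R) : exists s t g lam mu,
  (s * d + t * v0) * lam + (t * e) * mu = g /\ rdvd g d /\ rdvd g v0 /\ rdvd g e.
Proof.
have [g1 [d1 [v1 [hd [hv [a1 [b1 h1]]]]]]] := comax_divide d v0.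
have [g [x2 [e' [hg1 [he [a2 [b2 h2]]]]]]] := comax_divide g1 e.
have [|s [t [lam [mu hst]]]] := @gh3 (x2 * d1) (x2 * v1) e' (a2 * b1) b2 (a2 * a1).
  rewrite (_ : _ + _ + _ = x2 * a2 * (d1 * a1 + v1 * b1) + e' * b2); last ring.
  by rewrite h1 mulr1.
exists s, t, g, lam, mu; split.
  rewrite hd hv he hg1.
  rewrite (_ : _ + _ = g * ((s * (x2 * d1) + t * (x2 * v1)) * lam + t * e' * mu)); last ring.
  by rewrite hst mulr1.
split; first by exists (x2 * d1); rewrite hd hg1 mulrA.
split; first by exists (x2 * v1); rewrite hv hg1 mulrA.
by exists e'.
Qed.

Lemma dvd_mx_inv d n (x : 'rV[R]_n) (Q Q' : 'M[R]_n) :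
  Q *m Q' = 1%:M -> dvd_mx d (x *m Q) -> dvd_mx d x.
Proof. by move=> hQ h; rewrite -[x]mulmx1 -hQ mulmxA; apply: dvd_mxMr. Qed.

Lemma two_rows n (u v : 'rV[R]_n.+1) : exists s t : R,
  (forall j, inrow (u 0 j) (s *: u + t *: v)) /\ (forall j, inrow (v 0 j) (s *: u + t *: v)).
Proof.
case: n u v => [|n] u v.
  have [g [p [q [hp [hq [al [be hab]]]]]]] := comax_divide (u 0 0) (v 0 0).
  exists al, be.
  have hg : inrow g (al *: u + be *: v).
    have := inrow_entry (al *: u + be *: v) 0.
    have -> : g = (al *: u + be *: v) 0 0.
      rewrite !mxE hp hq (_ : _ + _ = g * (p * al + q * be)); last ring.
      by rewrite hab mulr1.
    done.
  by split => j; rewrite (ord1 j); apply: (inrow_dvd hg); [exists p | exists q].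
have [Q1 [[Q1' [hQ1 _]] [hz1 hd1]]] := hermite_row u.
pose v1 : 'rV[R]_(1 + n.+1) := v *m Q1.
have [Q2' [iQ2' [hz2 hd2]]] := hermite_row (rsubmx v1).
pose Q2 : 'M[R]_(1 + n.+1) := block_mx 1%:M 0 0 Q2'.
have [Q2inv [hQ2 _]] : invertible_mx Q2 by apply: invertible_block => //; exact: invertible1.
set d := (u *m Q1) 0 ord0.
set v0 := v1 0 ord0.
set e := (rsubmx v1 *m Q2') 0 ord0.
have [s [t [g [lam [mu [hg [gd [gv ge]]]]]]]] := triple_div d v0 e.
exists s, t.
set w := s *: u + t *: v.
pose QQ : 'M[R]_n.+2 := Q1 *m Q2.
have hQQ : QQ *m (Q2inv *m Q1') = 1%:M.
  by rewrite /QQ mulmxA -(mulmxA Q1) hQ2 mulmx1 hQ1.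
have [x1 hx1] : exists x1 : 'rV[R]_(1 + n.+1), u *m Q1 = x1 by eexists.
have [y1 hy1] : exists y1 : 'rV[R]_(1 + n.+1), v *m Q1 = y1 by eexists.
have uQE : forall j : 'I_n.+2, (u *m QQ) 0 j = if (j == 0 :> nat) then d else 0.
  move=> j; rewrite /QQ mulmxA.
  change (((u *m Q1 : 'rV[R]_(1 + n.+1)) *m Q2) 0 j = if (j == 0 :> nat) then d else 0).
  rewrite hx1 row_block mulmx1.
  case: (split_ordP (j : 'I_(1 + n.+1))) => [k0 -> | k ->].
    rewrite row_mxEl mxE (ord1 k0) /d hx1 /=; congr (x1 _ _); exact: val_inj.
  rewrite row_mxEr /= [LHS]mxE big1 // => l _.
  by rewrite mxE -hx1 hz1 ?mul0r.
have vQE : forall j : 'I_n.+2, (v *m QQ) 0 j =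
    if (j == 0 :> nat) then v0 else if (j == 1 :> nat) then e else 0.
  move=> j; rewrite /QQ mulmxA.
  change (((v *m Q1 : 'rV[R]_(1 + n.+1)) *m Q2) 0 j =
    if (j == 0 :> nat) then v0 else if (j == 1 :> nat) then e else 0).
  rewrite row_block mulmx1.
  case: (split_ordP (j : 'I_(1 + n.+1))) => [k0 -> | k ->].
    rewrite row_mxEl mxE (ord1 k0) /v0 /=; congr (_ _ _); exact: val_inj.
  rewrite row_mxEr /=; case: k => [[|k] hk] /=; first by rewrite /e; congr (_ _ _); exact: val_inj.
  by rewrite hz2.
set uq := u *m QQ in uQE *; set vq := v *m QQ in vQE *.
have guq : dvd_mx g uq.
  move=> i j; rewrite (ord1 i) uQE; case: ifP => _; [exact: gd | exact: rdvd0].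
have gvq : dvd_mx g vq.
  move=> i j; rewrite (ord1 i) vQE; case: ifP => _; first exact: gv.
  case: ifP => _; [exact: ge | exact: rdvd0].
have gu := dvd_mx_inv hQQ guq; have gv' := dvd_mx_inv hQQ gvq.
have wQE : forall j, (w *m QQ) 0 j = s * uq 0 j + t * vq 0 j.
  by move=> j; rewrite /w mulmxDl -!scalemxAl -/uq -/vq !mxE.
have hgw : inrow g w.
  rewrite -hg; apply: inrowD; apply: inrowMr.
    by have := inrow_mul w QQ ord0; rewrite wQE uQE vQE.
  by have := inrow_mul w QQ (lift ord0 ord0); rewrite wQE uQE vQE /= mulr0 add0r.
by split => j; apply: (inrow_dvd hgw); [exact: gu | exact: gv'].
Qed.
Lemma row_comb m n (A : 'M[R]_(m.+1, n.+1)) :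
  exists p : 'rV[R]_m.+1, forall i j, inrow (A i j) (p *m A).
Proof.
elim: m A => [|m IH] A.
  exists 1%:M => i j; rewrite mul1mx (ord1 i); exact: inrow_entry.
pose A' : 'M[R]_(1 + m.+1, n.+1) := A.
have [p' hp'] := IH (dsubmx A').
set w := p' *m dsubmx A'.
have [s [t [hu hw]]] := two_rows (usubmx A') w.
exists (row_mx (s%:M : 'rV[R]_1) (t *: p')).
have -> : row_mx (s%:M : 'rV[R]_1) (t *: p') *m A = s *: usubmx A' + t *: w.
  rewrite -[A](vsubmxK A') mul_row_col mul_scalar_mx -scalemxAl.
  done.
move=> i j; case: (split_ordP (i : 'I_(1 + m.+1))) => [k0 -> | k ->].
  by have := hu j; rewrite (ord1 k0) mxE.
apply: (inrow_trans hw).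
by have := hp' k j; rewrite mxE.
Qed.
Lemma key m n (A : 'M[R]_(m.+1, n.+1)) : exists P Q, invertible_mx P /\ invertible_mx Q /\
  forall i j, rdvd ((P *m A *m Q) ord0 ord0) (A i j).
Proof.
have [p hp] := row_comb A.
have [Q0 [[Q0' [h1 h2]] [hz hd]]] := hermite_row p.
set e := (p *m Q0) 0 ord0.
have hpQ : p *m Q0 = e *: delta_mx 0 ord0.
  apply/matrixP => i j; rewrite (ord1 i) [RHS]mxE [delta_mx _ _ _ _]mxE.
  have [-> | hj] := eqVneq j ord0; first by rewrite eqxx mulr1.
  have hj' : (j : nat) != 0%N.
    by apply: contra hj => /eqP hj0; apply/eqP/val_inj.
  by rewrite hz // andbF mulr0.
set r := row ord0 Q0' *m A.
have hpA : p *m A = e *: r.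
  by rewrite -[p]mulmx1 -h1 mulmxA hpQ -scalemxAl -rowE /r scalemxAl.
have [Q [iQ [_ hq]]] := hermite_row r.
exists Q0', Q; split; first by exists Q0.
split => // i j.
have -> : (Q0' *m A *m Q) ord0 ord0 = (r *m Q) 0 ord0.
  by rewrite /r -row_mul -row_mul [RHS]mxE.
apply: (dvd_inrow _ (hp i j)) => k.
by rewrite hpA [X in rdvd _ X]mxE; apply: rdvdMl; apply: hq.
Qed.
Lemma diag_block d m n (D : 'M[R]_(m, n)) : diag_divchain D -> dvd_mx d D ->
  diag_divchain (block_mx (d%:M : 'M[R]_1) 0 0 D : 'M[R]_(1 + m, 1 + n)).
Proof.
move=> [hD0 hD1] hd; split.
  move=> i j hij.
  case: (split_ordP i) hij => [i0 -> | i1 ->]; case: (split_ordP j) => [j0 -> | j1 ->] /= hij.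
  - by exfalso; apply: hij; rewrite (ord1 i0) (ord1 j0).
  - by rewrite block_mxEur mxE.
  - by rewrite block_mxEdl mxE.
  - rewrite block_mxEdr; apply: hD0 => e; apply: hij; rewrite e //.
move=> i i' j j' hij hij' hii'.
case: (split_ordP i) hij hii' => [i0 -> | i1 ->]; case: (split_ordP j) => [j0 -> | j1 ->] /= hij hii';
case: (split_ordP i') hij' hii' => [i0' -> | i1' ->]; case: (split_ordP j') => [j0' -> | j1' ->] /= hij' hii';
  try (exfalso; bnd; lia).
- rewrite block_mxEul block_mxEdr (ord1 i0) (ord1 j0) mxE eqxx mulr1n; exact: hd.
- rewrite !block_mxEdr; apply: hD1; lia.
Qed.
Lemma clear_block m n (B : 'M[R]_(1 + m, 1 + n)) (d : R) :
  ulsubmx B = d%:M -> dvd_mx d B ->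
  exists P Q C, invertible_mx P /\ invertible_mx Q /\ dvd_mx d C /\
    P *m B *m Q = block_mx (d%:M : 'M[R]_1) 0 0 C.
Proof.
move=> hul hd.
have h1 : forall j : 'I_n, exists r, ursubmx B 0 j = d * r.
  by move=> j; have [r hr] := hd (lshift m 0) (rshift 1 j); exists r; rewrite !mxE; exact: hr.
have [f hf] := fin_all_exists h1.
have h2 : forall i : 'I_m, exists r, dlsubmx B i 0 = d * r.
  by move=> i; have [r hr] := hd (rshift 1 i) (lshift n 0); exists r; rewrite !mxE; exact: hr.
have [g hg] := fin_all_exists h2.
pose c : 'rV[R]_n := \row_j f j.
pose r : 'cV[R]_m := \col_i g i.
have hc : ursubmx B = d *: c.
  by apply/matrixP => i j; rewrite (ord1 i) hf !mxE.
have hr : dlsubmx B = d *: r.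
  by apply/matrixP => i j; rewrite (ord1 j) hg !mxE.
pose P1 : 'M[R]_(1 + m) := block_mx 1%:M 0 (- r) 1%:M.
pose Q1 : 'M[R]_(1 + n) := block_mx 1%:M (- c) 0 1%:M.
exists P1, Q1, (drsubmx B - r *m ursubmx B).
split.
  exists (block_mx 1%:M 0 r 1%:M); rewrite /P1 !mulmx_block.
  rewrite !mulmx0 !mul0mx !mulmx1 !mul1mx !addr0 !add0r addNr subrr.
  by split; rewrite -scalar_mx_block.
split.
  exists (block_mx 1%:M c 0 1%:M); rewrite /Q1 !mulmx_block.
  rewrite !mulmx0 !mul0mx !mulmx1 !mul1mx !addr0 !add0r addNr subrr.
  by split; rewrite -scalar_mx_block.
split.
  move=> i j; rewrite [X in rdvd _ X]mxE; apply: rdvdD.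
    by rewrite !mxE; exact: hd.
  rewrite [X in rdvd _ X]mxE; apply: rdvdN; apply: dvd_mxMl => a b.
  by rewrite !mxE; exact: hd.
rewrite -{1}[B]submxK hul hc hr /P1 /Q1 !mulmx_block.
rewrite !mulmx0 !mul0mx !mulmx1 !mul1mx !addr0.
by rewrite !mul_mx_scalar mul_scalar_mx !scalerN !addNr !mul0mx !add0r addrC mulNmx.
Qed.
Lemma edr_main m n (A : 'M[R]_(m, n)) : admits_diagonal_reduction A.
Proof.
elim: m n A => [|m IH] n A.
  exists 1%:M, 1%:M; split; first exact: invertible1.
  split; first exact: invertible1.
  by split; move=> [i hi]; exfalso; rewrite ltn0 in hi.
case: n A => [|n] A.
  exists 1%:M, 1%:M; split; first exact: invertible1.
  split; first exact: invertible1.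
  by split; [move=> i [j hj] | move=> i i' [j hj]]; exfalso; rewrite ltn0 in hj.
have [P0 [Q0 [iP0 [iQ0 hdiv]]]] := key A.
pose B : 'M[R]_(1 + m, 1 + n) := P0 *m A *m Q0.
set d := (P0 *m A *m Q0) ord0 ord0 in hdiv.
have hdB : dvd_mx d B by apply: dvd_mxMr; apply: dvd_mxMl => i j; exact: hdiv.
have hul : ulsubmx B = d%:M.
  rewrite [LHS]mx11_scalar mxE; congr (_%:M).
  have e1 : (lshift m (0 : 'I_1) : 'I_m.+1) = ord0 by apply: val_inj.
  have e2 : (lshift n (0 : 'I_1) : 'I_n.+1) = ord0 by apply: val_inj.
  by rewrite /B mxE e1 e2.
have [P1 [Q1 [C [iP1 [iQ1 [hC hB]]]]]] := clear_block hul hdB.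
have [P' [Q' [iP' [iQ' hD]]]] := IH n C.
exists ((block_mx (1%:M : 'M[R]_1) 0 0 P' : 'M[R]_(1 + m)) *m P1 *m P0).
exists (Q0 *m Q1 *m (block_mx (1%:M : 'M[R]_1) 0 0 Q' : 'M[R]_(1 + n))).
have ib1 : invertible_mx (block_mx (1%:M : 'M[R]_1) 0 0 P' : 'M[R]_(1 + m)).
  by apply: invertible_block => //; exact: invertible1.
have ib2 : invertible_mx (block_mx (1%:M : 'M[R]_1) 0 0 Q' : 'M[R]_(1 + n)).
  by apply: invertible_block => //; exact: invertible1.
split.
  by apply: invertibleM => //; apply: invertibleM.
split.
  by apply: invertibleM => //; apply: invertibleM.
have -> : (block_mx (1%:M : 'M[R]_1) 0 0 P' : 'M[R]_(1 + m)) *m P1 *m P0 *m A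
     *m (Q0 *m Q1 *m (block_mx (1%:M : 'M[R]_1) 0 0 Q' : 'M[R]_(1 + n)))
   = block_mx (d%:M : 'M[R]_1) 0 0 (P' *m C *m Q').
  have hB2 : forall Y : 'M[R]_(1 + n, 1 + n),
      P1 *m (P0 *m (A *m (Q0 *m (Q1 *m Y)))) = block_mx (d%:M : 'M[R]_1) 0 0 C *m Y.
    by move=> Y; rewrite -hB /B !mulmxA.
  by rewrite -!mulmxA hB2 !mulmx_block !mulmx0 !mul0mx !mulmx1 !mul1mx !addr0 !add0r mulmx0.
have hdv : dvd_mx d (P' *m C *m Q') by apply: dvd_mxMr; apply: dvd_mxMl.
exact: (diag_block hD hdv).
Qed.
End Main.

Lemma edr_bezout (R : comPzRingType) : elementary_divisor_ring R -> bezout_ring R.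
Proof.
move=> hE n; case: n => [|m] a.
  exists 0 => x; split.
    by case=> c ->; exists 0; rewrite big_ord0 mul0r.
  by case=> r ->; exists (fun _ => 0); rewrite big_ord0 mul0r.
set A : 'M[R]_(1, m.+1) := \row_j a j.
have [P [Q [[P' [hP1 hP2]] [[Q' [hQ1 hQ2]] [hD _]]]]] := hE _ _ A.
set D := P *m A *m Q.
have hA : A = P' *m D *m Q'.
  by rewrite /D !mulmxA hP2 mul1mx -mulmxA hQ1 mulmx1.
have hD0 : forall k : 'I_m.+1, k != 0 -> D 0 k = 0.
  move=> k hk; apply: hD => /= e; move/eqP: hk; apply.
  by apply/val_inj; rewrite /= -e.
have h1 : forall (F : 'I_1 -> R), \sum_(j < 1) F j = F 0.
  by move=> F; rewrite big_ord1.
exists (D 0 0) => x; split.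
- case=> c ->.
  exists (\sum_(i < m.+1) c i * (P' 0 0 * Q' 0 i)).
  rewrite big_distrr /=; apply: eq_bigr => i _.
  have -> : a i = A 0 i by rewrite mxE.
  rewrite hA mxE (bigD1 0) //= big1 ?addr0; last first.
    by move=> k hk; rewrite mxE h1 hD0 // mulr0 mul0r.
  rewrite mxE h1.
  ring.
- case=> r ->.
  exists (fun i => r * P 0 0 * Q i 0).
  rewrite mulrC /D mxE big_distrr /=; apply: eq_bigr => i _.
  rewrite mxE h1 mxE.
  ring.
Qed.

Theorem theorem3p3 (R : comPzRingType) :
  locally_stable R -> (elementary_divisor_ring R <-> bezout_ring R).
Proof.
move=> LS; split; first exact: edr_bezout.
by move=> BZ m n A; apply: edr_main.
Qed.
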